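(* Let $n,N\ge 1$ be integers. For $c\in\{a,b\}$ let $\alpha^{(c)}\in\mathbb{R}^n$ have strictly positive entries and let $\beta^{(c)}=(\beta_{c,1},\dots,\beta_{c,n})$ with $0\le\beta_{c,i}<1$. Let $\mathcal{A}$ (for resource $a$) and $\mathcal{B}$ (for resource $b$) be finite sets of AIMD matrices built from $(\alpha^{(a)},\beta^{(a)})$ and $(\alpha^{(b)},\beta^{(b)})$ respectively, each containing the corresponding full-decrease drop matrix, denoted $A_1\in\mathcal{A}$ and $B_1\in\mathcal{B}$. Let $\mathcal{A}_\Gamma$ be the set of all matrices $\Gamma=\mathrm{diag}(\gamma_a,\gamma_b)\in\mathbb{R}^{2nN\times 2nN}$ where $\gamma_a$ is built from some $C_1,\dots,C_N\in\mathcal{A}$ and $\gamma_b$ from some $C_1,\dots,C_N\in\mathcal{B}$ as described in the context. Let $\Gamma_1\in\mathcal{A}_\Gamma$ be the matrix obtained by taking $C_1=\dots=C_N=A_1$ for $\gamma_a$ and $C_1=\dots=C_N=B_1$ for $\gamma_b$. Then: (a) For all $\Gamma\in\mathcal{A}_\Gamma$ and all $\zeta\in\mathbb{R}^{2nN}$, $\|\Gamma\zeta\|_{N,1}\le\|\zeta\|_{N,1}$. (b) The subspace $\mathcal{E}=\{\zeta=[z_a^\top\; z_b^\top]^\top\in\mathbb{R}^{2nN}: e^\top z_{a,1}=e^\top z_{b,1}=0\}$ is invariant under every $\Gamma\in\mathcal{A}_\Gamma$. (c) For all $\zeta\in\mathcal{E}$, $\|\Gamma_1\zeta\|_{N,1}\le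 q\|\zeta\|_{N,1}$, where $$q=\max\left(\frac1N\sum_{i=1}^N\beta_a^i,\ \frac1N\sum_{j=1}^N\beta_b^j\right)<1,$$ with $\beta_c=\max_{i}\beta_{c,i}$ the multiplicative-decrease parameter of resource $c\in\{a,b\}$.
   Context: $e=(1,\dots,1)^\top\in\mathbb{R}^n$. An AIMD matrix built from a growth vector $\alpha\in\mathbb{R}^n_{>0}$ and decrease parameters $\beta_1,\dots,\beta_n\in[0,1)$ is a matrix of the form $A=\mathrm{diag}(\tilde\beta)+(e^\top\alpha)^{-1}\alpha(e^\top-\tilde\beta^\top)$ where $\tilde\beta=(\tilde\beta_1,\dots,\tilde\beta_n)^\top$ with each $\tilde\beta_i\in\{\beta_i,1\}$; these matrices are nonnegative and column stochastic. The full-decrease drop matrix is the one with $\tilde\beta_i=\beta_i$ for all $i$. Given $C_1,\dots,C_N\in\mathbb{R}^{n\times n}$, set $P_m=C_mC_{m-1}\cdots C_1$ for $m=1,\dots,N$, and define $\gamma\in\mathbb{R}^{nN\times nN}$ as the $N\times N$ block matrix (blocks of size $n\times n$) whose $k$-th block in the first block column is $\frac1k\sum_{i=0}^{k-1}P_{N-i}$ ($k=1,\dots,N$) and all other blocks are zero. A vector $\zeta\in\mathbb{R}^{2nN}$ is written $\zeta=[z_a^\top\;z_b^\top]^\top$ with $z_c=[z_{c,1}^\top,\dots,z_{c,N}^\top]^\top$, $z_{c,k}\in\mathbb{R}^n$. The norm is $\|\zeta\|_{N,1}=\max_{c\in\{a,b\},\,k=1,\dots,N}\|z_{c,k}\|_1$,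 where $\|\cdot\|_1$ is the 1-norm on $\mathbb{R}^n$. *)

(* Defs.v *)
From HB Require Import structures.
From mathcomp Require Import all_boot all_order all_algebra.
Set Implicit Arguments. Unset Strict Implicit. Unset Printing Implicit Defensive.
Import Order.TTheory GRing.Theory Num.Theory.
Local Open Scope ring_scope.

Section AIMD.
Variable R : realFieldType.

Definition evec (n : nat) : 'cV[R]_n := const_mx 1.

Definition aimd_mx (n : nat) (alpha bt : 'cV[R]_n) : 'M[R]_n :=
  diag_mx bt^T + (((evec n)^T *m alpha) 0 0)^-1 *: (alpha *m ((evec n)^T - bt^T)).

Definition is_aimd (n : nat) (alpha beta : 'cV[R]_n) (A : 'M[R]_n) : Prop :=
  exists bt : 'cV[R]_n,
    (forall i, bt i 0 = beta i 0 \/ bt i 0 = 1) /\ A = aimd_mx alpha bt.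

Definition drop_mx (n : nat) (alpha beta : 'cV[R]_n) : 'M[R]_n := aimd_mx alpha beta.

(* P_m = C_m C_{m-1} ... C_1 (P_0 = identity, unused). *)
Fixpoint Pprod (n : nat) (C : nat -> 'M[R]_n) (m : nat) : 'M[R]_n :=
  match m with
  | 0 => 1%:M
  | m'.+1 => C m'.+1 *m Pprod C m'
  end.

(* gamma : N x N block matrix (blocks n x n); block (k, 0) (0-based k) is
   1/(k+1) * sum_{i=0}^{k} P_{N-i}; all other blocks zero. *)
Definition gamma_mx (n N : nat) (C : nat -> 'M[R]_n) : 'M[R]_(\sum_(k < N) n) :=
  @mxblock R N N (fun _ => n) (fun _ => n)
    (fun (k j : 'I_N) =>
       if val j == 0%N then
         (k.+1%:R)^-1 *: \sum_(i < k.+1) Pprod C (N - i)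
       else 0).

Definition Gamma_mx (n N : nat) (Ca Cb : nat -> 'M[R]_n)
  : 'M[R]_(\sum_(k < N) n + \sum_(k < N) n) :=
  block_mx (gamma_mx N Ca) 0 0 (gamma_mx N Cb).

Definition in_AGamma (n N : nat) (sA sB : seq 'M[R]_n)
  (G : 'M[R]_(\sum_(k < N) n + \sum_(k < N) n)) : Prop :=
  exists Ca Cb : nat -> 'M[R]_n,
    (forall m, (1 <= m <= N)%N -> Ca m \in sA) /\
    (forall m, (1 <= m <= N)%N -> Cb m \in sB) /\
    G = Gamma_mx N Ca Cb.

Definition norm1 (n : nat) (v : 'cV[R]_n) : R := \sum_i `|v i 0|.

(* z_a = upper half, z_b = lower half, z_{c,k} = k-th block of z_c *)
Definition zblk (n N : nat) (c : bool) (z : 'cV[R]_(\sum_(k < N) n + \sum_(k < N) n))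
  (k : 'I_N) : 'cV[R]_n :=
  @submxcol R N (fun _ => n) 1 (if c then usubmx z else dsubmx z) k.

Definition normN1 (n N : nat) (z : 'cV[R]_(\sum_(k < N) n + \sum_(k < N) n)) : R :=
  \big[Num.max/0]_(c : bool) \big[Num.max/0]_(k < N) norm1 (zblk c z k).

Definition in_E (n N : nat) (hN : (0 < N)%N)
  (z : 'cV[R]_(\sum_(k < N) n + \sum_(k < N) n)) : Prop :=
  ((evec n)^T *m zblk true z (Ordinal hN)) 0 0 = 0 /\
  ((evec n)^T *m zblk false z (Ordinal hN)) 0 0 = 0.

Definition betamax (n : nat) (beta : 'cV[R]_n) : R := \big[Num.max/0]_i beta i 0.

Definition qrate (n N : nat) (betaa betab : 'cV[R]_n) : R :=
  Num.max ((N%:R)^-1 * \sum_(1 <= i < N.+1) betamax betaa ^+ i)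
          ((N%:R)^-1 * \sum_(1 <= j < N.+1) betamax betab ^+ j).

End AIMD.

Arguments in_AGamma {R n} N sA sB G.
Arguments Gamma_mx {R n} N Ca Cb.
Arguments qrate {R n} N betaa betab.
Arguments normN1 {R n N} z.
Arguments in_E {R n N} hN z.

(* Main.v *)
Require Import Defs.
From HB Require Import structures.
From mathcomp Require Import all_boot all_order all_algebra ring lra zify.
Import Order.TTheory GRing.Theory Num.Theory.
Local Open Scope ring_scope.
Set Implicit Arguments. Unset Strict Implicit. Unset Printing Implicit Defensive.
Section H.
Variable R : realFieldType.

Lemma evec_sum n (v : 'cV[R]_n) : ((evec R n)^T *m v) 0 0 = \sum_i v i 0.
Proof. rewrite !mxE; apply: eq_bigr => i _; by rewrite !mxE mul1r. Qed.

Lemma norm1_ge0 n (v : 'cV[R]_n) : 0 <= norm1 v.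
Proof. by apply: sumr_ge0 => i _. Qed.

Lemma norm1Z n (a : R) (v : 'cV[R]_n) : norm1 (a *: v) = `|a| * norm1 v.
Proof. rewrite /norm1 mulr_sumr; apply: eq_bigr => i _; by rewrite mxE normrM. Qed.

Lemma norm1D n (v w : 'cV[R]_n) : norm1 (v + w) <= norm1 v + norm1 w.
Proof. rewrite /norm1 -big_split /=; apply: ler_sum => i _; by rewrite mxE ler_normD. Qed.

Lemma norm1_sum n (I : finType) (F : I -> 'cV[R]_n) :
  norm1 (\sum_i F i) <= \sum_i norm1 (F i).
Proof.
apply: (big_ind2 (fun (v : 'cV[R]_n) (x : R) => norm1 v <= x)).
- by rewrite /norm1 big1 // => i _; rewrite mxE normr0.
- move=> v1 x1 v2 x2 h1 h2; apply: le_trans (norm1D _ _) _; exact: lerD.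
- by [].
Qed.

Lemma norm1_mul_le n (M : 'M[R]_n) (c : R) (v : 'cV[R]_n) :
  (forall i j, 0 <= M i j) -> (forall j, \sum_i M i j <= c) ->
  norm1 (M *m v) <= c * norm1 v.
Proof.
move=> Mge0 Mc.
rewrite /norm1.
apply: (@le_trans _ _ (\sum_i \sum_j M i j * `|v j 0|)).
  apply: ler_sum => i _; rewrite mxE; apply: le_trans (ler_norm_sum _ _ _) _.
  by apply: ler_sum => j _; rewrite normrM ger0_norm.
rewrite exchange_big /= mulr_sumr; apply: ler_sum => j _.
by rewrite -mulr_suml; apply: ler_wpM2r.
Qed.

Lemma sum_mul_stoch n (M : 'M[R]_n) (v : 'cV[R]_n) :
  (forall j, \sum_i M i j = 1) -> \sum_i (M *m v) i 0 = \sum_i v i 0.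
Proof.
move=> Ms; under eq_bigr do rewrite mxE.
rewrite exchange_big /=; apply: eq_bigr => j _.
by rewrite -mulr_suml Ms mul1r.
Qed.

End H.
Section H.
Variable R : realFieldType.

Lemma aimdE n (alpha bt : 'cV[R]_n) i j :
  aimd_mx alpha bt i j =
  (i == j)%:R * bt j 0 + (\sum_k alpha k 0)^-1 * (alpha i 0 * (1 - bt j 0)).
Proof.
rewrite /aimd_mx evec_sum !mxE big_ord1 !mxE.
congr (_ + _).
by case: eqP => [->|]; rewrite ?mul1r ?mul0r.
Qed.

Variables (n : nat) (alpha : 'cV[R]_n) (halpha : forall i, 0 < alpha i 0).

Lemma sumalpha_gt0 : (0 < n)%N -> 0 < \sum_k alpha k 0.
Proof.
case: n alpha halpha => // m a ha _.
rewrite big_ord_recl; have := ha ord0.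
have : 0 <= \sum_(i < m) a (lift ord0 i) 0 by apply: sumr_ge0 => i _; apply: ltW.
lra.
Qed.

Lemma aimd_ge0 (bt : 'cV[R]_n) : (forall j, 0 <= bt j 0 <= 1) -> forall i j, 0 <= aimd_mx alpha bt i j.
Proof.
move=> hb i j; rewrite aimdE.
have [h0 h1] := andP (hb j).
apply: addr_ge0; first by apply: mulr_ge0.
apply: mulr_ge0; first by rewrite invr_ge0; apply: sumr_ge0 => k _; apply: ltW.
by apply: mulr_ge0; [apply: ltW|rewrite subr_ge0].
Qed.

Lemma aimd_colsum (bt : 'cV[R]_n) : (0 < n)%N -> forall j, \sum_i aimd_mx alpha bt i j = 1.
Proof.
move=> hn j; under eq_bigr do rewrite aimdE.
rewrite big_split /= (bigD1 j) //= eqxx mul1r big1; last first.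
  by move=> i /negbTE ->; rewrite mul0r.
rewrite -mulr_sumr -mulr_suml mulrA mulVf ?mul1r; last first.
  by apply: lt0r_neq0; apply: sumalpha_gt0.
by rewrite addr0 addrC subrK.
Qed.

Lemma aimd_contract (bt : 'cV[R]_n) (b : R) (v : 'cV[R]_n) :
  (0 < n)%N -> (forall j, 0 <= bt j 0 <= b) -> b <= 1 ->
  \sum_i v i 0 = 0 ->
  norm1 (aimd_mx alpha bt *m v) <= b * norm1 v.
Proof.
move=> hn hb hb1 hv.
set s := \sum_k alpha k 0.
have s0 : 0 < s by apply: sumalpha_gt0.
pose M := \matrix_(i, j) (aimd_mx alpha bt i j - (1 - b) * (s^-1 * alpha i 0)).
have -> : aimd_mx alpha bt *m v = M *m v.
  apply/matrixP => i k; rewrite !mxE (ord1 k).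
  rewrite [RHS](eq_bigr (fun j => aimd_mx alpha bt i j * v j 0 - (1 - b) * (s^-1 * alpha i 0) * v j 0)); last first.
    by move=> j _; rewrite mxE mulrBl.
  by rewrite sumrB -mulr_sumr hv mulr0 subr0.
apply: norm1_mul_le => [i j|j].
  rewrite mxE aimdE; have [h0 h1] := andP (hb j).
  have ha := halpha i.
  have hs : 0 < s^-1 by rewrite invr_gt0.
  rewrite -/s; set t := s^-1 in hs *.
  have -> : (i == j)%:R * bt j 0 + t * (alpha i 0 * (1 - bt j 0)) - (1 - b) * (t * alpha i 0)
     = (i == j)%:R * bt j 0 + t * alpha i 0 * (b - bt j 0) by ring.
  apply: addr_ge0; first by apply: mulr_ge0.
  apply: mulr_ge0; last by rewrite subr_ge0.
  by apply: mulr_ge0; apply: ltW.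
under eq_bigr do rewrite mxE.
rewrite sumrB aimd_colsum // -mulr_sumr -mulr_sumr.
rewrite -/s mulVf ?mulr1; last by apply: lt0r_neq0.
have [h0 h1] := andP (hb j).
lra.
Qed.


End H.
Section H.
Variable R : realFieldType.

Lemma zblk_Gamma (n N : nat) (hN : (0 < N)%N) (Ca Cb : nat -> 'M[R]_n) c z k :
  zblk c (Gamma_mx N Ca Cb *m z) k =
  (k.+1%:R)^-1 *: \sum_(i < k.+1) (Pprod (if c then Ca else Cb) (N - i) *m zblk c z (Ordinal hN)).
Proof.
rewrite /zblk /Gamma_mx -[z in _ *m z]vsubmxK mul_block_col !mul0mx addr0 add0r.
have -> : (if c then usubmx (col_mx (gamma_mx N Ca *m usubmx z) (gamma_mx N Cb *m dsubmx z))
   else dsubmx (col_mx (gamma_mx N Ca *m usubmx z) (gamma_mx N Cb *m dsubmx z)))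
   = gamma_mx N (if c then Ca else Cb) *m (if c then usubmx z else dsubmx z).
  by case: c; rewrite ?col_mxKu ?col_mxKd.
set w := (if c then usubmx z else dsubmx z).
set C := (if c then Ca else Cb).
rewrite /gamma_mx -[w in _ *m w]submxcolK mul_mxblock_mxrow mxcolK.
rewrite (bigD1 (Ordinal hN)) //= [X in _ + X]big1 ?addr0; last first.
  move=> j hj; case: (boolP (val j == 0%N)) => [/eqP hj0|hj0]; last by rewrite mul0mx.
  by exfalso; move/eqP: hj; apply; apply: val_inj.
by rewrite -scalemxAl mulmx_suml.
Qed.

End H.
Section H.
Variable R : realFieldType.

Definition stoch n (M : 'M[R]_n) := (forall i j, 0 <= M i j) /\ (forall j, \sum_i M i j = 1).

Lemma Pprod_norm n (C : nat -> 'M[R]_n) K (v : 'cV[R]_n) :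
  (forall m, (1 <= m <= K)%N -> stoch (C m)) ->
  forall m, (m <= K)%N -> norm1 (Pprod C m *m v) <= norm1 v.
Proof.
move=> hC; elim=> [|m IH] hm /=; first by rewrite mul1mx.
rewrite -mulmxA; have [h1 h2] := hC m.+1 hm.
apply: (@le_trans _ _ (1 * norm1 (Pprod C m *m v))).
  by apply: norm1_mul_le => // j; rewrite h2.
by rewrite mul1r; apply: IH; apply: ltnW.
Qed.

Lemma Pprod_sum n (C : nat -> 'M[R]_n) K (v : 'cV[R]_n) :
  (forall m, (1 <= m <= K)%N -> stoch (C m)) ->
  forall m, (m <= K)%N -> \sum_i (Pprod C m *m v) i 0 = \sum_i v i 0.
Proof.
move=> hC; elim=> [|m IH] hm /=; first by rewrite mul1mx.
rewrite -mulmxA; have [h1 h2] := hC m.+1 hm.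
by rewrite sum_mul_stoch // IH // ltnW.
Qed.

Lemma Pprod_contract n (A : 'M[R]_n) (b : R) (v : 'cV[R]_n) :
  (forall w : 'cV[R]_n, \sum_i w i 0 = 0 -> norm1 (A *m w) <= b * norm1 w) ->
  (forall w : 'cV[R]_n, \sum_i (A *m w) i 0 = \sum_i w i 0) -> 0 <= b ->
  \sum_i v i 0 = 0 ->
  forall m, norm1 (Pprod (fun _ => A) m *m v) <= b ^+ m * norm1 v.
Proof.
move=> hA hs hb hv; elim=> [|m IH] /=; first by rewrite mul1mx expr0 mul1r.
have hsm : forall m, \sum_i (Pprod (fun _ => A) m *m v) i 0 = 0.
  by elim=> [|k IHk] /=; rewrite ?mul1mx // -mulmxA hs.
rewrite -mulmxA; apply: le_trans (hA _ (hsm m)) _.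
by rewrite exprS -mulrA; apply: ler_wpM2l.
Qed.

Lemma norm1_le_normN1 n N (z : 'cV[R]_(\sum_(k < N) n + \sum_(k < N) n)) c k :
  norm1 (zblk c z k) <= normN1 z.
Proof.
rewrite /normN1; apply: le_trans (le_bigmax _ _ c).
exact: (le_bigmax _ (fun k => norm1 (zblk c z k)) k).
Qed.

Lemma normN1_le n N (z : 'cV[R]_(\sum_(k < N) n + \sum_(k < N) n)) X :
  0 <= X -> (forall c k, norm1 (zblk c z k) <= X) -> normN1 z <= X.
Proof.
move=> hX h; rewrite /normN1; apply: bigmax_le => // c _.
by apply: bigmax_le => // k _.
Qed.

End H.
Section H.
Variable R : realFieldType.
Variables (b : R) (N : nat) (hb0 : 0 <= b) (hb1 : b <= 1).

Definition Sk k := \sum_(i < k.+1) b ^+ (N - i).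

Lemma avg_step k : (k.+1 < N)%N ->
  (k.+1%:R)^-1 * Sk k <= (k.+2%:R)^-1 * Sk k.+1.
Proof.
move=> hk.
have hS : Sk k <= k.+1%:R * b ^+ (N - k.+1).
  rewrite /Sk mulr_natl.
  have -> : b ^+ (N - k.+1) *+ k.+1 = \sum_(i < k.+1) b ^+ (N - k.+1) by rewrite sumr_const card_ord.
  apply: ler_sum => i _; apply: ler_wiXn2l => //.
  have := ltn_ord i; lia.
have -> : Sk k.+1 = Sk k + b ^+ (N - k.+1) by rewrite /Sk [LHS]big_ord_recr.
set S := Sk k in hS *; set m := b ^+ _ in hS *.
have a0 : 0 < k.+1%:R :> R by rewrite ltr0n.
set a := k.+1%:R in hS a0 *.
have -> : k.+2%:R = a + 1 :> R by rewrite /a -natr1.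
rewrite -subr_ge0.
have -> : (a + 1)^-1 * (S + m) - a^-1 * S = (a * m - S) / (a * (a + 1)).
  field; apply/andP; split; apply: lt0r_neq0 => //; lra.
apply: divr_ge0; first by rewrite subr_ge0.
apply: mulr_ge0; lra.
Qed.

Lemma avg_mono k d : (k + d < N)%N ->
  (k.+1%:R)^-1 * Sk k <= ((k + d).+1%:R)^-1 * Sk (k + d).
Proof.
elim: d => [|d IH] h; first by rewrite addn0.
apply: le_trans (IH _) _; first lia.
rewrite addnS; apply: avg_step; lia.
Qed.

Lemma Sk_full : (0 < N)%N -> Sk N.-1 = \sum_(1 <= i < N.+1) b ^+ i.
Proof.
move=> hN; rewrite /Sk prednK // big_add1 /= -(big_mkord xpredT (fun i => b ^+ (N - i))) big_nat_rev /=.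
apply: eq_big_nat => i /andP [_ hi]; congr (_ ^+ _); lia.
Qed.

Lemma avg_le k : (k < N)%N ->
  (k.+1%:R)^-1 * Sk k <= (N%:R)^-1 * \sum_(1 <= i < N.+1) b ^+ i.
Proof.
move=> hk; have hN : (0 < N)%N by lia.
have := @avg_mono k (N.-1 - k); rewrite -Sk_full //.
have -> : (k + (N.-1 - k)).+1 = N by lia.
have -> : (k + (N.-1 - k))%N = N.-1 by lia.
apply; lia.
Qed.

Lemma avg_le_b : (0 < N)%N -> (N%:R)^-1 * \sum_(1 <= i < N.+1) b ^+ i <= b.
Proof.
move=> hN.
have : \sum_(1 <= i < N.+1) b ^+ i <= \sum_(1 <= i < N.+1) b.
  rewrite big_nat_cond [X in _ <= X]big_nat_cond; apply: ler_sum => i /andP [/andP [hi _] _].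
  have -> : i = (i.-1).+1 by lia.
  rewrite exprS; apply: ler_piMr => //; exact: exprn_ile1.
rewrite sumr_const_nat subSS subn0 -mulr_natr => h.
have hN' : 0 < N%:R :> R by rewrite ltr0n.
rewrite ler_pdivrMl //; lra.
Qed.

Lemma avg_ge0 : 0 <= (N%:R)^-1 * \sum_(1 <= i < N.+1) b ^+ i.
Proof. apply: mulr_ge0; first by rewrite invr_ge0. by apply: sumr_ge0 => i _; apply: exprn_ge0. Qed.

End H.

Lemma betamax_props (R : realFieldType) n (beta : 'cV[R]_n) :
  (forall i, 0 <= beta i 0 < 1) ->
  [/\ 0 <= betamax beta, betamax beta < 1 & forall i, beta i 0 <= betamax beta].
Proof.
move=> hb; split.
- rewrite /betamax; apply: (big_ind (fun x => 0 <= x)) => //.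
    by move=> x y hx hy; rewrite le_max hx.
  by move=> i _; case/andP: (hb i).
- rewrite /betamax; apply: bigmax_lt => // i _; by case/andP: (hb i).
- by move=> i; rewrite /betamax; apply: (le_bigmax _ (fun i => beta i 0)).
Qed.
Section H.
Variable R : realFieldType.

Lemma aimd_stoch n (alpha beta : 'cV[R]_n) (A : 'M[R]_n) :
  (0 < n)%N -> (forall i, 0 < alpha i 0) -> (forall i, 0 <= beta i 0 < 1) ->
  is_aimd alpha beta A -> stoch A.
Proof.
move=> hn ha hb [bt [hbt ->]].
have hbt' : forall j, 0 <= bt j 0 <= 1.
  move=> j; case: (hbt j) => ->; last by rewrite ler01 lexx.
  by case/andP: (hb j) => -> /ltW.
split; [exact: aimd_ge0 | exact: aimd_colsum].
Qed.

Lemma avg_bound n k (F : 'I_k.+1 -> 'cV[R]_n) (x : 'I_k.+1 -> R) :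
  (forall i, norm1 (F i) <= x i) ->
  norm1 ((k.+1%:R)^-1 *: \sum_i F i) <= (k.+1%:R)^-1 * \sum_i x i.
Proof.
move=> h; rewrite norm1Z ger0_norm ?invr_ge0 ?ler0n //.
apply: ler_wpM2l; first by rewrite invr_ge0 ler0n.
apply: le_trans (norm1_sum _) _; exact: ler_sum.
Qed.

Lemma avg_const k (x : R) : (k.+1%:R)^-1 * \sum_(i < k.+1) x = x.
Proof.
rewrite sumr_const card_ord -[x *+ _]mulr_natl mulrA mulVf ?mul1r //.
by rewrite pnatr_eq0.
Qed.

Lemma normN1_ge0 n N (hN : (0 < N)%N) (z : 'cV[R]_(\sum_(k < N) n + \sum_(k < N) n)) :
  0 <= normN1 z.
Proof. apply: le_trans (norm1_le_normN1 z true (Ordinal hN)); exact: norm1_ge0. Qed.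

End H.
Unset Implicit Arguments. Set Strict Implicit.
Lemma partc (R : realFieldType) n N (hn : (0 < n)%N) (hN : (0 < N)%N)
  (alpha beta : 'cV[R]_n) (halpha : forall i, 0 < alpha i 0)
  (hbeta : forall i, 0 <= beta i 0 < 1) (z0 : 'cV[R]_n) (k : 'I_N) :
  \sum_i z0 i 0 = 0 ->
  norm1 ((k.+1%:R)^-1 *: \sum_(i < k.+1) (Pprod (fun _ => drop_mx alpha beta) (N - i) *m z0))
  <= ((N%:R)^-1 * \sum_(1 <= i < N.+1) betamax beta ^+ i) * norm1 z0.
Proof.
move=> hz.
have [b0 b1 bi] := betamax_props hbeta.
set b := betamax beta in b0 b1 bi *.
apply: le_trans (avg_bound (x := fun i : 'I_k.+1 => b ^+ (N - i) * norm1 z0) _) _.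
  move=> i; apply: Pprod_contract => //.
  - move=> w hw; apply: aimd_contract => // [j|]; last exact: ltW.
    by rewrite (bi j) andbT; case/andP: (hbeta j).
  - move=> w; apply: sum_mul_stoch; exact: aimd_colsum.
rewrite -mulr_suml mulrA; apply: ler_wpM2r; first exact: norm1_ge0.
exact: (avg_le b0 (ltW b1) (ltn_ord k)).
Qed.

Theorem lemma1 (R : realFieldType) (n N : nat) (hn : (0 < n)%N) (hN : (0 < N)%N)
  (alphaa alphab betaa betab : 'cV[R]_n)
  (halphaa : forall i, 0 < alphaa i 0) (halphab : forall i, 0 < alphab i 0)
  (hbetaa : forall i, 0 <= betaa i 0 < 1) (hbetab : forall i, 0 <= betab i 0 < 1)
  (sA sB : seq 'M[R]_n)
  (hsA : forall A, A \in sA -> is_aimd alphaa betaa A)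
  (hsB : forall B, B \in sB -> is_aimd alphab betab B)
  (hA1 : drop_mx alphaa betaa \in sA)
  (hB1 : drop_mx alphab betab \in sB) :
  let Gamma1 := Gamma_mx N (fun _ => drop_mx alphaa betaa) (fun _ => drop_mx alphab betab) in
  (* (a) *)
  (forall G, in_AGamma N sA sB G -> forall zeta, normN1 (G *m zeta) <= normN1 zeta) /\
  (* (b) *)
  (forall G, in_AGamma N sA sB G -> forall zeta, in_E hN zeta -> in_E hN (G *m zeta)) /\
  (* (c) *)
  ((forall zeta, in_E hN zeta ->
      normN1 (Gamma1 *m zeta) <= qrate N betaa betab * normN1 zeta) /\
   qrate N betaa betab < 1).
Proof.
move=> Gamma1.
have hst : forall Ca Cb, (forall m, (1 <= m <= N)%N -> Ca m \in sA) ->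
    (forall m, (1 <= m <= N)%N -> Cb m \in sB) ->
    forall c m, (1 <= m <= N)%N -> stoch (if c then Ca m else Cb m).
  move=> Ca Cb hCa hCb [] m hm.
    by apply: (aimd_stoch hn halphaa hbetaa); apply: hsA; apply: hCa.
  by apply: (aimd_stoch hn halphab hbetab); apply: hsB; apply: hCb.
have hq0 : forall (beta : 'cV[R]_n), (forall i, 0 <= beta i 0 < 1) ->
    0 <= (N%:R)^-1 * \sum_(1 <= i < N.+1) betamax beta ^+ i.
  by move=> beta hb; have [b0 b1 _] := betamax_props hb; apply: avg_ge0.
have hq1 : forall (beta : 'cV[R]_n), (forall i, 0 <= beta i 0 < 1) ->
    (N%:R)^-1 * \sum_(1 <= i < N.+1) betamax beta ^+ i < 1.
  move=> beta hb; have [b0 b1 _] := betamax_props hb.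
  by apply: le_lt_trans (avg_le_b b0 (ltW b1) hN) b1.
split.
  move=> G [Ca [Cb [hCa [hCb ->]]]] zeta.
  apply: normN1_le; first exact: normN1_ge0.
  move=> c k; rewrite zblk_Gamma.
  apply: le_trans (avg_bound (x := fun _ => norm1 (zblk c zeta (Ordinal hN))) _) _.
    move=> i; apply: (@Pprod_norm _ _ _ N) => //; last by rewrite leq_subr.
    move=> m hm; case: c; [exact: (hst Ca Cb hCa hCb true m hm) | exact: (hst Ca Cb hCa hCb false m hm)].
  by rewrite avg_const norm1_le_normN1.
split.
  move=> G [Ca [Cb [hCa [hCb ->]]]] zeta [ha hb].
  have key : forall c, ((evec R n)^T *m zblk c zeta (Ordinal hN)) 0 0 = 0 ->
      ((evec R n)^T *m zblk c (Gamma_mx N Ca Cb *m zeta) (Ordinal hN)) 0 0 = 0.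
    move=> c; rewrite !evec_sum zblk_Gamma /= big_ord1 subn0 invr1 scale1r => h.
    rewrite (@Pprod_sum _ _ _ N) //.
    move=> m hm; case: c h => _; [exact: (hst Ca Cb hCa hCb true m hm) | exact: (hst Ca Cb hCa hCb false m hm)].
  by split; apply: key.
split; last first.
  rewrite /qrate gt_max; apply/andP; split; [exact: hq1 | exact: hq1].
move=> zeta [ha hb].
apply: normN1_le.
  apply: mulr_ge0; last exact: normN1_ge0.
  by rewrite le_max hq0.
move=> c k; rewrite /Gamma1 zblk_Gamma.
apply: le_trans (_ : _ <= qrate N betaa betab * norm1 (zblk c zeta (Ordinal hN))) _; last first.
  by apply: ler_wpM2l; [rewrite le_max hq0 | apply: norm1_le_normN1].
case: c ha hb => /= ha hb.
  apply: le_trans (@partc _ _ _ hn hN _ _ halphaa hbetaa _ k _) _; first by rewrite -evec_sum.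
  by apply: ler_wpM2r; [exact: norm1_ge0 | rewrite le_max lexx].
apply: le_trans (@partc _ _ _ hn hN _ _ halphab hbetab _ k _) _; first by rewrite -evec_sum.
by apply: ler_wpM2r; [exact: norm1_ge0 | rewrite le_max lexx orbT].
Qed.
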